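(* Let $n\ge2$ and $\Delta\subset B_n$ a proper ideal. For each facet $(A;x)$ of $\mathrm{Bier}(B_n,\Delta)$ define $\chi(A;x)\in\{-1,0,1\}^n$ by $\chi(A;x)_a=-1$ if $a\in A\cup\{x\}$ and $a\le x$; $\chi(A;x)_a=0$ if $a\notin A\cup\{x\}$; $\chi(A;x)_a=+1$ if $a\in A\cup\{x\}$ and $a>x$. Then ordering the facets so that $\chi$ increases in lexicographic order is a shelling order of $\mathrm{Bier}(B_n,\Delta)$.
   Context: $B_n$ is the Boolean lattice of subsets of $[1,n]=\{1,\dots,n\}$. A proper ideal $\Delta\subset B_n$ is a nonempty family of subsets of $[1,n]$ closed under taking subsets with $[1,n]\notin\Delta$. The Bier sphere $\mathrm{Bier}(B_n,\Delta)$ is the simplicial complex whose faces are the pairs $(B,C)$ with $B\subsetneq C\subseteq[1,n]$, $B\in\Delta$, $C\notin\Delta$, with $(B',C')$ a face of $(B,C)$ iff $B'\subseteq B$ and $C\subseteq C'$ (concretely $(B,C)$ is the vertex set $B\sqcup\{\bar d: d\notin C\}$ on $[1,n]\sqcup\{\bar1,\dots,\bar n\}$). Its facets are $(A;x):=(A,A\cup\{x\})$ with $A\in\Delta$, $x\notin A$, $A\cup\{x\}\notin\Delta$. Lexicographic order: $u<_{\mathrm{lex}}v$ if at the first coordinate where they differ, $u$ is smaller. A shelling order of a pure complex is an ordering $F_1,F_2,\dots$ of its facets such that for each $k\ge2$, $F_k\cap(F_1\cup\dots\cup F_{k-1})$ is pure of dimension $\dim F_k-1$. *)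

(* Defs.v *)
(* Ground set [1,n] is modelled by 'I_n (element i stands for i+1;
   the natural order is preserved). Vertices of the Bier sphere: 'I_n + 'I_n,
   with inl d = d and inr d = \bar d. *)
From mathcomp Require Import all_boot all_order all_algebra.
Set Implicit Arguments. Unset Strict Implicit. Unset Printing Implicit Defensive.
Import Order.TTheory GRing.Theory Num.Theory.

Section Bier.
Variable n : nat.

Definition Bn_proper_ideal (D : {set {set 'I_n}}) : Prop :=
  [/\ D != set0,
      (forall B C : {set 'I_n}, C \in D -> B \subset C -> B \in D)
    & [set: 'I_n] \notin D].

Definition face_vs (B C : {set 'I_n}) : {set 'I_n + 'I_n} :=
  (inl @: B) :|: (inr @: (~: C)).

Definition bier_faces (D : {set {set 'I_n}}) : {set {set 'I_n + 'I_n}} :=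
  [set S | [exists B : {set 'I_n}, exists C : {set 'I_n},
     [&& B \proper C, B \in D, C \notin D & S == face_vs B C]]].

Definition bier_facet (D : {set {set 'I_n}}) (F : {set 'I_n} * 'I_n) : bool :=
  [&& F.1 \in D, F.2 \notin F.1 & (F.2 |: F.1) \notin D].

Definition facet_vs (F : {set 'I_n} * 'I_n) : {set 'I_n + 'I_n} :=
  face_vs F.1 (F.2 |: F.1).

Definition chi (F : {set 'I_n} * 'I_n) : 'I_n -> int :=
  fun a => if a \in F.2 |: F.1 then (if (a <= F.2)%N then (-1)%R else 1%R) else 0%R.

Definition lex_lt (u v : 'I_n -> int) : Prop :=
  exists i : 'I_n, (forall j : 'I_n, (j < i)%N -> u j = v j) /\ (u i < v i)%R.
Definition lex_le (u v : 'I_n -> int) : Prop := (forall i, u i = v i) \/ lex_lt u v.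

Definition sdim {V : finType} (S : {set V}) : int := (#|S|%:Z - 1)%R.

Definition pure_of_dim {V : finType} (K : {set {set V}}) (d : int) : Prop :=
  (forall S, S \in K -> exists2 T, T \in K & S \subset T /\ sdim T = d) /\
  (forall T, T \in K -> (sdim T <= d)%R).

(* F_k ∩ (F_1 ∪ ... ∪ F_{k-1}) as a subcomplex, for a list of facets (0-indexed) *)
Definition inter_prev {V : finType} (s : seq {set V}) (k : nat) : {set {set V}} :=
  [set S : {set V} | (S \subset nth set0 s k) &&
           [exists i : 'I_k, S \subset nth set0 s i]].

Definition shelling_order {V : finType} (s : seq {set V}) : Prop :=
  forall k, (1 <= k < size s)%N ->
    pure_of_dim (inter_prev s k) (sdim (nth set0 s k) - 1)%R.

End Bier.

(* Main.v *)
Require Import Defs.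
From mathcomp Require Import all_boot all_order all_algebra zify.
Import Order.TTheory GRing.Theory Num.Theory.

Lemma lexlt_asym n (u v : 'I_n -> int) : lex_lt u v -> lex_le v u -> False.
Proof.
case=> i [Hi Hlt] [Heq|[j [Hj Hlt2]]].
- by move: Hlt; rewrite Heq ltxx.
- case: (ltngtP i j) => [ij|ji|ij].
  + by move: Hlt; rewrite (Hj i ij) ltxx.
  + by move: Hlt2; rewrite (Hi j ji) ltxx.
  + have e : i = j by apply: val_inj.
    subst j; move: Hlt Hlt2 => h1 h2; lia.
Qed.

Lemma pointwise_lex n (u v : 'I_n -> int) :
  (forall c, u c <= v c)%R -> (exists c, u c < v c)%R -> lex_lt u v.
Proof.
move=> Hle [c0 Hc0].
pose P m := [exists c : 'I_n, (val c == m) && (u c < v c)%R].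
have exP : exists m, P m by exists (val c0); apply/existsP; exists c0; rewrite eqxx.
case: (ex_minnP exP) => m /existsP [c /andP [/eqP cm hc]] hmin.
exists c; split => // j jc.
have := Hle j; case: (boolP (u j < v j)%R) => hj hle.
  have := hmin _ (introT existsP (ex_intro _ j (andb_true_intro (conj (eqxx (val j)) hj)))).
  by rewrite -cm leqNgt jc.
lia.
Qed.

Lemma ideal_down n (D : {set {set 'I_n}}) (B C : {set 'I_n}) :
  Bn_proper_ideal D -> C \in D -> B \subset C -> B \in D.
Proof. by case=> _ h _; apply: h. Qed.

Lemma nb_inl n (D : {set {set 'I_n}}) A x a :
  Bn_proper_ideal D -> bier_facet D (A, x) -> a \in A -> (x < a)%N ->
  exists H, [/\ bier_facet D H, lex_lt (chi H) (chi (A, x)) &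
            facet_vs (A, x) :\ inl a \subset facet_vs H].
Proof.
move=> HD /and3P [/= AD xA SD] aA xa.
have ax : a != x by apply/eqP => e; move: xa; rewrite e ltnn.
case: (boolP (x |: (A :\ a) \in D)) => hD.
- have ES : a |: (x |: (A :\ a)) = x |: A.
    apply/setP => c; rewrite !inE; case: (c =P a) => [->|]; rewrite ?aA ?orbT //.
  exists (x |: (A :\ a), a); split.
  + apply/and3P; split => //=; last by rewrite ES.
    by rewrite !inE negb_or ax /= eqxx.
  + apply: pointwise_lex.
      move=> c; rewrite /chi /= ES.
      case: ifP => // _; case: ifP; case: ifP => // h1 h2; lia.
    exists a; rewrite /chi /= ES !inE aA orbT leqnn.
    by rewrite leqNgt xa.
  + apply/subsetP => v; rewrite !inE /facet_vs /face_vs /=.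
    case/andP => va /orP [/imsetP [c cA ev]|/imsetP [c cS ev]]; subst v.
      apply/orP; left; apply/imsetP; exists c => //.
      by rewrite !inE cA andbT; apply/orP; right; apply: contra va => /eqP ->.
    apply/orP; right; apply/imsetP; exists c => //.
    by rewrite ES.
- exists (A :\ a, x); split.
  + apply/and3P; split => //=.
      by case: HD => _ Hc _; apply: (Hc _ _ AD); apply: subsetDl.
    by rewrite !inE negb_and negbK xA ?orbF ?orbT.
  + apply: pointwise_lex.
      move=> c; rewrite /chi /= !inE.
      case: (c =P a) => [->|ca] /=.
        by rewrite (negbTE ax) aA /= leqNgt xa.
      by case: ifP => // _; case: ifP.
    exists a; rewrite /chi /= !inE eqxx (negbTE ax) aA /= leqNgt xa.
    by [].
  + apply/subsetP => v; rewrite !inE /facet_vs /face_vs /=.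
    case/andP => va /orP [/imsetP [c cA ev]|/imsetP [c cS ev]]; subst v.
      apply/orP; left; apply/imsetP; exists c => //.
      by rewrite !inE cA andbT; apply: contra va => /eqP ->.
    apply/orP; right; apply/imsetP; exists c => //.
    move: cS; rewrite !inE; case: (c == x) => //=.
    by rewrite negb_and => ->; rewrite orbT.
Qed.

Lemma nb_inr n (D : {set {set 'I_n}}) A x b :
  Bn_proper_ideal D -> bier_facet D (A, x) -> b \notin x |: A -> (b < x)%N ->
  exists H, [/\ bier_facet D H, lex_lt (chi H) (chi (A, x)) &
            facet_vs (A, x) :\ inr b \subset facet_vs H].
Proof.
move=> HD /and3P [/= AD xA SD] bS bx.
have bx' : b != x by apply/eqP => e; move: bx; rewrite e ltnn.
have bA : b \notin A by move: bS; rewrite !inE negb_or => /andP [].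
case: (boolP (b |: A \in D)) => hD.
- exists (b |: A, x); split.
  + apply/and3P; split => //=.
      by rewrite !inE negb_or eq_sym bx' xA.
    apply: contra SD => h; case: HD => _ Hc _; apply: (Hc _ _ h).
    by apply/subsetP => c; rewrite !inE; case/orP => ->; rewrite ?orbT.
  + apply: pointwise_lex.
      move=> c; rewrite /chi /= !inE.
      case: (c =P b) => [->|cb] /=.
        by rewrite (negbTE bx') (negbTE bA) /= ltnW.
      by case: ifP.
    exists b; rewrite /chi /= !inE eqxx orbT (negbTE bx') (negbTE bA) /= ltnW //.
  + apply/subsetP => v; rewrite !inE /facet_vs /face_vs /=.
    case/andP => va /orP [/imsetP [c cA ev]|/imsetP [c cS ev]]; subst v.
      apply/orP; left; apply/imsetP; exists c => //.
      by rewrite !inE cA orbT.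
    apply/orP; right; apply/imsetP; exists c => //.
    move: cS; rewrite !inE !negb_or => /andP [-> ->] /=; rewrite andbT.
    by apply: contra va => /eqP ->.
- exists (A, b); split.
  + by apply/and3P; split.
  + exists b; split.
      move=> j jb; rewrite /chi /= !inE.
      have jb' : (j == b) = false by apply/eqP => e; move: jb; rewrite e ltnn.
      have jx : (j == x) = false by apply/eqP => e; move: jb; rewrite e ltnNge ltnW.
      by rewrite jb' jx /= (ltnW jb) (ltnW (ltn_trans jb bx)).
    by rewrite /chi /= !inE eqxx /= (negbTE bx') (negbTE bA) leqnn.
  + apply/subsetP => v; rewrite !inE /facet_vs /face_vs /=.
    case/andP => va /orP [/imsetP [c cA ev]|/imsetP [c cS ev]]; subst v.
      by apply/orP; left; apply/imsetP; exists c.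
    apply/orP; right; apply/imsetP; exists c => //.
    move: cS; rewrite !inE !negb_or => /andP [_ ->]; rewrite andbT.
    by apply: contra va => /eqP ->.
Qed.

Lemma exists_v n (D : {set {set 'I_n}}) A x B y :
  Bn_proper_ideal D -> bier_facet D (A, x) -> bier_facet D (B, y) ->
  lex_lt (chi (B, y)) (chi (A, x)) ->
  (exists a, [/\ a \in A, (x < a)%N & a \notin B]) \/
  (exists b, [/\ b \notin x |: A, b \in y |: B & (b < x)%N]).
Proof.
move=> HD /and3P [/= AD xA SD] /and3P [/= BD yB TD] Hlt.
case: (boolP [exists a, [&& a \in A, (x < a)%N & a \notin B]]).
  by case/existsP => a /and3P [h1 h2 h3]; left; exists a.
move=> NA.
case: (boolP [exists b, [&& b \notin x |: A, b \in y |: B & (b < x)%N]]).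
  by case/existsP => b /and3P [h1 h2 h3]; right; exists b.
move=> NB; exfalso.
have NA' : forall a, a \in A -> (x < a)%N -> a \in B.
  move=> a h1 h2; apply: contraNT NA => h3; apply/existsP; exists a; by rewrite h1 h2 h3.
have NB' : forall b, b \in y |: B -> (b < x)%N -> b \in x |: A.
  move=> b h1 h2; apply: contraNT NB => h3; apply/existsP; exists b; by rewrite h1 h2 h3.
case: Hlt => i [Hag Hi]; move: Hi; rewrite /chi /=.
case: (ltngtP i x) => [ix|xi|ix].
- idtac.
  case: (boolP (i \in x |: A)) => iS; case: (boolP (i \in y |: B)) => iT;
    try (case: ifP => _); try done.
  by have := NB' i iT ix; rewrite (negbTE iS).
- have ixA : (i \in x |: A) = (i \in A).
    by rewrite !inE; case: (i =P x) => // e; move: xi; rewrite e ltnn.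
  rewrite ixA.
  case: (boolP (i \in y |: B)) => iT; last first.
    case: (boolP (i \in A)) => iA //.
    by move: iT; rewrite !inE (NA' _ iA xi) orbT.
  case: ifP => iy; last by case: ifP.
  + move=> _.
    have xy : (x < y)%N by apply: (leq_trans xi iy).
    have SB : x |: A \subset B.
      apply/subsetP => c cS.
      case: (ltngtP c x) => [cx|xc|cx].
      * have := Hag c (ltn_trans cx xi); rewrite /chi /= cS (ltnW cx).
        case: ifP => cT; last by [].
        case: ifP => _ // _; move: cT; rewrite !inE; case: (c =P y) => //= e.
        by move: cx xy; rewrite e => h1 h2; move: (ltn_trans h1 h2); rewrite ltnn.
      * have cA : c \in A.
          move: cS; rewrite !inE; case: (c =P x) => //= e.
          by move: xc; rewrite e ltnn.
        exact: (NA' _ cA xc).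
      * have cx' : c = x by apply: val_inj.
        subst c; have := Hag x xi; rewrite /chi /= !inE eqxx /= leqnn.
        case: ifP => xT; last by [].
        case: ifP => _ // _; move: xT; case: (x =P y) => //= e.
        by move: xy; rewrite e ltnn.
    by case: HD => _ Hc _; move: SD; rewrite (Hc _ _ BD SB).
- have e : i = x by apply: val_inj.
  subst i; rewrite !inE eqxx /=.
  by case: ifP => _; try (case: ifP => _).
Qed.

Lemma in_vs_l n (A : {set 'I_n}) x c : (inl c \in facet_vs (A, x)) = (c \in A).
Proof.
rewrite /facet_vs /face_vs /= inE mem_imset; last by move=> ? ? [].
by case: (c \in A) => //=; apply/imsetP; case.
Qed.

Lemma in_vs_r n (A : {set 'I_n}) x c : (inr c \in facet_vs (A, x)) = (c \notin x |: A).
Proof.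
have inj : injective (@inr 'I_n 'I_n) by move=> ? ? [].
rewrite /facet_vs /face_vs /= inE (mem_imset _ _ inj).
rewrite inE; case: (c \in x |: A) => /=; rewrite ?orbT ?orbF //.
by apply/imsetP; case.
Qed.

Lemma vs_sub n (D : {set {set 'I_n}}) A x B y :
  Bn_proper_ideal D -> bier_facet D (A, x) -> bier_facet D (B, y) ->
  facet_vs (A, x) \subset facet_vs (B, y) -> (A, x) = (B, y).
Proof.
move=> HD /and3P [/= AD xA SD] /and3P [/= BD yB TD] sub.
have AB : A \subset B.
  by apply/subsetP => a; rewrite -(in_vs_l _ _ x) => /(subsetP sub); rewrite !in_vs_l.
have TS : y |: B \subset x |: A.
  apply/subsetP => c cT; apply: contraT => cS.
  by move: cS; rewrite -(in_vs_r _ _ x) => /(subsetP sub); rewrite in_vs_r cT.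
have xB : x \notin B.
  apply: contra SD => xB.
  case: HD => _ Hc _; apply: (Hc _ _ BD).
  by apply/subsetP => c; rewrite !inE; case/orP => [/eqP ->|/(subsetP AB)] //.
have BA : B = A.
  apply/eqP; rewrite eqEsubset AB andbT; apply/subsetP => c cB.
  have : c \in x |: A by apply: (subsetP TS); rewrite !inE cB orbT.
  rewrite !inE; case/orP => // /eqP e; subst c; by rewrite cB in xB.
subst B.
have : y \in x |: A by apply: (subsetP TS); rewrite !inE eqxx.
by rewrite !inE (negbTE yB) orbF => /eqP ->.
Qed.

Lemma chi_inj n (D : {set {set 'I_n}}) A x B y :
  bier_facet D (A, x) -> bier_facet D (B, y) ->
  (forall c, chi (A, x) c = chi (B, y) c) -> (A, x) = (B, y).
Proof.
move=> /and3P [/= AD xA SD] /and3P [/= BD yB TD] E.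
have ST : x |: A = y |: B.
  apply/setP => c; have := E c; rewrite /chi /=.
  by case: (c \in x |: A); case: (c \in y |: B); do 2?case: ifP.
have xy : x = y.
  case: (ltngtP x y) => [h|h|h]; last by apply: val_inj.
  - have := E y; rewrite /chi /= ST !inE eqxx /= leqnn leqNgt h.
    by [].
  - have := E x; rewrite /chi /= -ST !inE eqxx /= leqnn leqNgt h.
    by [].
subst y; congr (_, _).
by rewrite -(setU1K xA) -(setU1K yB) ST.
Qed.

Lemma vs_sub' n (D : {set {set 'I_n}}) F G :
  Bn_proper_ideal D -> bier_facet D F -> bier_facet D G ->
  facet_vs F \subset facet_vs G -> F = G.
Proof. by case: F => A x; case: G => B y; apply: vs_sub. Qed.

Lemma chi_inj' n (D : {set {set 'I_n}}) F G :
  bier_facet D F -> bier_facet D G -> (forall c, chi F c = chi G c) -> F = G.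
Proof. by case: F => A x; case: G => B y; apply: chi_inj. Qed.

Arguments chi_inj' {n D F G}.
Arguments vs_sub' {n D F G}.
Arguments exists_v {n D A x B y}.
Arguments nb_inl {n D A x a}.
Arguments nb_inr {n D A x b}.
Arguments lexlt_asym {n u v}.

Lemma key_lemma n (D : {set {set 'I_n}}) F G :
  Bn_proper_ideal D -> bier_facet D F -> bier_facet D G -> lex_lt (chi G) (chi F) ->
  exists v H, [/\ v \in facet_vs F, v \notin facet_vs G,
      bier_facet D H, lex_lt (chi H) (chi F) & facet_vs F :\ v \subset facet_vs H].
Proof.
move=> HD; case: F => A x; case: G => B y => fF' fG Hl.
case: (exists_v HD fF' fG Hl) => [[a [aA xa aB]]|[b [bS bT bx]]].
  have [H [fH lH sH]] := nb_inl HD fF' aA xa.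
  by exists (inl a), H; split => //; rewrite in_vs_l.
have [H [fH lH sH]] := nb_inr HD fF' bS bx.
by exists (inr b), H; split => //; rewrite in_vs_r ?bS ?bT.
Qed.
Arguments key_lemma {n D F G}.

Lemma aux1 (a b : nat) : (a < b)%N -> (a%:Z - 1 <= b%:Z - 1 - 1)%R.
Proof. move=> h; lia. Qed.

Lemma aux2 (a : nat) : (a%:Z - 1 = (true + a)%N%:Z - 1 - 1)%R.
Proof. rewrite /=; lia. Qed.

Theorem mainTheorem8 (n : nat) (D : {set {set 'I_n}}) :
  (2 <= n)%N -> Bn_proper_ideal D ->
  forall s : seq ({set 'I_n} * 'I_n),
    uniq s ->
    (forall F, (F \in s) = bier_facet D F) ->
    (forall i j : 'I_(size s), (i < j)%N ->
        lex_le (chi (tnth (in_tuple s) i)) (chi (tnth (in_tuple s) j))) ->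
    shelling_order (map (@facet_vs n) s).
Proof.
move=> n2 HD s us Hmem Hsort k /andP [k1 ks]; rewrite size_map in ks.
have n0 : (0 < n)%N by apply: leq_trans n2.
pose x0 : {set 'I_n} * 'I_n := (set0, Ordinal n0).
have Hnth : forall i, (i < size s)%N ->
    nth set0 (map (@facet_vs n) s) i = facet_vs (nth x0 s i).
  by move=> i hi; rewrite (nth_map x0).
have Hfac : forall i, (i < size s)%N -> bier_facet D (nth x0 s i).
  by move=> i hi; rewrite -Hmem mem_nth.
have Hord : forall i j, (i < j)%N -> (j < size s)%N ->
    lex_le (chi (nth x0 s i)) (chi (nth x0 s j)).
  move=> i j ij js.
  have iz : (i < size s)%N by exact: (ltn_trans ij js).
  have := Hsort (Ordinal iz) (Ordinal js) ij.
  by rewrite !(tnth_nth x0).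
have Hdist : forall i j, (i < size s)%N -> (j < size s)%N ->
    nth x0 s i = nth x0 s j -> i = j.
  by move=> i j hi hj e; apply/eqP; rewrite -(nth_uniq x0 hi hj us) e.
have Hlt : forall i, (i < k)%N -> lex_lt (chi (nth x0 s i)) (chi (nth x0 s k)).
  move=> i ik; have iz : (i < size s)%N by exact: (ltn_trans ik ks).
  case: (Hord i k ik ks) => // E.
  have := chi_inj' (Hfac i iz) (Hfac k ks) E.
  by move/(Hdist _ _ iz ks) => e; move: ik; rewrite e ltnn.
rewrite (Hnth k ks).
have fF := Hfac k ks.
set F := nth x0 s k in Hlt fF *.
split.
- move=> S; rewrite inE => /andP [SF /existsP [i Si]].
  have iz := ltn_trans (ltn_ord i) ks.
  rewrite (Hnth i iz) in Si; rewrite (Hnth k ks) in SF.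
  have Hl := Hlt i (ltn_ord i).
  have key : exists v H, [/\ v \in facet_vs F, v \notin facet_vs (nth x0 s i),
      bier_facet D H, lex_lt (chi H) (chi F) & facet_vs F :\ v \subset facet_vs H].
    exact: key_lemma HD fF (Hfac i iz) Hl.
  case: key => v [H [vF vG fH lH sH]].
  have Hs : H \in s by rewrite Hmem.
  have js : (index H s < size s)%N by rewrite index_mem.
  have Hj : nth x0 s (index H s) = H by rewrite nth_index.
  have jk : (index H s < k)%N.
    case: (ltngtP (index H s) k) => // [kj|jk].
    - exfalso; apply: (lexlt_asym lH); rewrite -Hj; exact: Hord kj js.
    - exfalso; apply: (lexlt_asym lH); left => c.
      by rewrite -Hj jk.
  exists (facet_vs F :\ v).
    rewrite /inter_prev inE (Hnth k ks) subsetDl /=; apply/existsP; exists (Ordinal jk).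
    by rewrite /= (Hnth _ js) Hj.
  split.
    rewrite subsetD1 SF /=; apply: contra vG => vS; exact: (subsetP Si).
  by rewrite /sdim (cardsD1 v (facet_vs F)) vF; apply: aux2.
- move=> T; rewrite inE => /andP [TF /existsP [i Ti]].
  have iz := ltn_trans (ltn_ord i) ks.
  rewrite (Hnth i iz) in Ti; rewrite (Hnth k ks) in TF.
  apply: aux1; rewrite ltnNge; apply/negP => cle.
  have eT : T = facet_vs F by apply/eqP; rewrite eqEcard TF cle.
  subst T.
  have e := vs_sub' HD fF (Hfac i iz) Ti.
  have ki := Hdist _ _ ks iz e.
  by move: (ltn_ord i); rewrite -ki ltnn.
Qed.
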